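(* Let $G:\mathbb{R}^{d_x}\to\mathbb{R}$ be $\mu_x$-strongly convex and $L_x$-smooth, $F:\mathbb{R}^{d_y}\to\mathbb{R}\cup\{+\infty\}$ proper closed convex with conjugate $F^\star$, $K:\mathbb{R}^{d_x}\to\mathbb{R}^{d_y}$ linear, and $(x^\star,y^\star)$ a solution of $\min_x\max_y\{G(x)+\langle y,Kx\rangle-F^\star(y)\}$. Consider iterates of APDA with Inexact Prox (with any stepsizes $\eta_x,\eta_y,\beta_y>0$, $\theta\in[0,1]$ and any inner method, $\hat x^k\in\mathbb{R}^{d_x}$ being the point it returns), and let $w^{\star k}$ be the exact minimizer of $\Psi^k$. Then for all $k\ge0$ $(1+\frac{\mu_x\eta_x}{2})\frac1{\eta_x}\|x^{k+1}-x^\star\|^2\le\frac1{\eta_x}\|x^k-x^\star\|^2+(2\eta_x+\mu_x\eta_x^2)\|\nabla\Psi^k(\hat x^k)\|^2-\frac1{2\eta_x}\|x^k-w^{\star k}\|^2-2\langle K^\top\bar y^k-K^\top y^\star,\hat x^k-x^\star\rangle-\frac1{L_x}\|\nabla G(\hat x^k)-\nabla G(x^\star)\|^2.$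
   Context: $\mu_x$-strong convexity: $G(x')-G(x'')-\langle\nabla G(x''),x'-x''\rangle\ge\frac{\mu_x}{2}\|x'-x''\|^2$; $L_x$-smoothness: $\|\nabla G(x')-\nabla G(x'')\|\le L_x\|x'-x''\|$. A solution satisfies $\nabla G(x^\star)+K^\top y^\star=0$ and $0\in\partial F^\star(y^\star)-Kx^\star$. APDA with Inexact Prox: given $(x^0,y^0)$, $\bar y^0=y^0$, stepsizes $\eta_x,\eta_y,\beta_y>0$, $\theta\in[0,1]$, number of inner iterations $T$, inner method $\mathcal M$; for $k=0,1,\dots$: $\Psi^k(x)=G(x)+\frac{1}{2\eta_x}\|x-(x^k-\eta_xK^\top\bar y^k)\|^2$; $\hat x^k$ is the output of $T$ iterations of $\mathcal M$ applied to $\Psi^k$ (an approximate minimizer); $x^{k+1}=x^k-\eta_x(\nabla G(\hat x^k)+K^\top\bar y^k)$; $y^{k+1}=y^k-\eta_y(g^{k+1}-K\hat x^k)-\eta_y\beta_yK(K^\top y^k+\nabla G(\hat x^k))$ with $g^{k+1}\in\partial F^\star(y^{k+1})$; $\bar y^{k+1}=y^{k+1}+\theta(y^{k+1}-y^k)$. *)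

(* Defs.v *)
From HB Require Import structures.
From mathcomp Require Import all_boot all_order all_algebra.
From mathcomp Require Import all_classical all_reals all_analysis.
Set Implicit Arguments. Unset Strict Implicit. Unset Printing Implicit Defensive.
Import Order.TTheory GRing.Theory Num.Theory.
Import numFieldNormedType.Exports.
Local Open Scope classical_set_scope.
Local Open Scope ring_scope.

Section Defs.
Variable R : realType.

Definition dot n (u v : 'cV[R]_n) : R := \sum_(i < n) u i ord0 * v i ord0.
Definition sqnorm n (u : 'cV[R]_n) : R := dot u u.

Definition is_gradient n (G : 'cV[R]_n -> R) (gradG : 'cV[R]_n -> 'cV[R]_n) :=
  forall x, differentiable G x /\ forall v, 'D_v G x = dot (gradG x) v.

Definition strongly_convex n (mu : R) (G : 'cV[R]_n -> R) gradG :=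
  forall x1 x2, G x1 - G x2 - dot (gradG x2) (x1 - x2) >= mu / 2 * sqnorm (x1 - x2).

Definition smooth n (L : R) (gradG : 'cV[R]_n -> 'cV[R]_n) :=
  forall x1 x2, Num.sqrt (sqnorm (gradG x1 - gradG x2)) <= L * Num.sqrt (sqnorm (x1 - x2)).

Definition proper_fun n (F : 'cV[R]_n -> \bar R) :=
  (exists x, (F x < +oo)%E) /\ forall x, (-oo < F x)%E.

Definition convex_fun n (F : 'cV[R]_n -> \bar R) :=
  forall (x1 x2 : 'cV[R]_n) (t : R), 0 <= t <= 1 ->
    (F (t *: x1 + (1 - t) *: x2)%R <= t%:E * F x1 + (1 - t)%:E * F x2)%E.

Definition closed_fun n (F : 'cV[R]_n -> \bar R) :=
  closed [set p : 'cV[R]_n * R | (F p.1 <= p.2%:E)%E].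

Definition conjugate n (F : 'cV[R]_n -> \bar R) : 'cV[R]_n -> \bar R :=
  fun y => ereal_sup [set ((dot y x)%:E - F x)%E | x in [set: 'cV[R]_n]].

Definition subdiff n (F : 'cV[R]_n -> \bar R) (y : 'cV[R]_n) : set 'cV[R]_n :=
  [set g | F y \is a fin_num /\
           forall z, (F y + (dot g (z - y))%:E <= F z)%E].

Definition Psi dx dy (G : 'cV[R]_dx -> R) (K : 'M[R]_(dy, dx)) (eta : R)
    (xk : 'cV[R]_dx) (ybk : 'cV[R]_dy) (x : 'cV[R]_dx) : R :=
  G x + (2 * eta)^-1 * sqnorm (x - (xk - eta *: (K^T *m ybk))).

Definition gradPsi dx dy (gradG : 'cV[R]_dx -> 'cV[R]_dx) (K : 'M[R]_(dy, dx)) (eta : R)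
    (xk : 'cV[R]_dx) (ybk : 'cV[R]_dy) (x : 'cV[R]_dx) : 'cV[R]_dx :=
  gradG x + eta^-1 *: (x - (xk - eta *: (K^T *m ybk))).

End Defs.

(* Main.v *)
Require Import Defs.
From HB Require Import structures.
From mathcomp Require Import all_boot all_order all_algebra.
From mathcomp Require Import all_classical all_reals all_analysis.
From mathcomp Require Import ring lra.
Set Implicit Arguments. Unset Strict Implicit.
Import Order.TTheory GRing.Theory Num.Theory.
Import numFieldNormedType.Exports.
Local Open Scope classical_set_scope.
Local Open Scope ring_scope.

Lemma dotC (R : realType) n (u v : 'cV[R]_n) : dot u v = dot v u.
Proof. by apply: eq_bigr => i _; rewrite mulrC. Qed.
Lemma dotDl (R : realType) n (u v z : 'cV[R]_n) : dot (u + v) z = dot u z + dot v z.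
Proof. by rewrite /dot -big_split; apply: eq_bigr => i _; rewrite !mxE mulrDl. Qed.
Lemma dotZl (R : realType) n (a : R) (u z : 'cV[R]_n) : dot (a *: u) z = a * dot u z.
Proof. by rewrite /dot mulr_sumr; apply: eq_bigr => i _; rewrite !mxE mulrA. Qed.
Lemma dotNl (R : realType) n (u z : 'cV[R]_n) : dot (- u) z = - dot u z.
Proof. by rewrite -scaleN1r dotZl mulN1r. Qed.
Lemma dotBl (R : realType) n (u v z : 'cV[R]_n) : dot (u - v) z = dot u z - dot v z.
Proof. by rewrite dotDl dotNl. Qed.
Lemma dotNr (R : realType) n (u z : 'cV[R]_n) : dot z (- u) = - dot z u.
Proof. by rewrite dotC dotNl dotC. Qed.
Lemma dotDr (R : realType) n (u v z : 'cV[R]_n) : dot z (u + v) = dot z u + dot z v.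
Proof. by rewrite dotC dotDl !(dotC z). Qed.
Lemma dotZr (R : realType) n (a : R) (u z : 'cV[R]_n) : dot z (a *: u) = a * dot z u.
Proof. by rewrite dotC dotZl dotC. Qed.
Lemma dotBr (R : realType) n (u v z : 'cV[R]_n) : dot z (u - v) = dot z u - dot z v.
Proof. by rewrite dotC dotBl !(dotC z). Qed.
Lemma sqnorm_ge0 (R : realType) n (u : 'cV[R]_n) : 0 <= sqnorm u.
Proof. by apply: sumr_ge0 => i _; rewrite -expr2 sqr_ge0. Qed.
Lemma sqnormD (R : realType) n (u v : 'cV[R]_n) :
  sqnorm (u + v) = sqnorm u + 2 * dot u v + sqnorm v.
Proof. rewrite /sqnorm dotDl !dotDr (dotC v u); ring. Qed.
Lemma sqnormB (R : realType) n (u v : 'cV[R]_n) :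
  sqnorm (u - v) = sqnorm u - 2 * dot u v + sqnorm v.
Proof. rewrite /sqnorm dotBl !dotBr (dotC v u); ring. Qed.
Lemma sqnormZ (R : realType) n (a : R) (u : 'cV[R]_n) :
  sqnorm (a *: u) = a ^+ 2 * sqnorm u.
Proof. rewrite /sqnorm dotZl dotZr; ring. Qed.
Lemma sqnormN (R : realType) n (u : 'cV[R]_n) : sqnorm (- u) = sqnorm u.
Proof. by rewrite /sqnorm dotNl dotNr opprK. Qed.
Lemma dot_le (R : realType) n (u v : 'cV[R]_n) (s : R) : 0 < s ->
  2 * s * dot u v <= sqnorm u + s ^+ 2 * sqnorm v.
Proof.
move=> s0; have := sqnorm_ge0 (u - s *: v).
rewrite sqnormB sqnormZ dotZr; lra.
Qed.

Lemma lim_t (R : realType) (A C : R) : 0 <= C ->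
  (forall t, 0 < t -> t <= 1 -> A <= t * C) -> A <= 0.
Proof.
move=> C0 H; rewrite leNgt; apply/negP => A0.
have AC : 0 < A + C by lra.
have t0 : 0 < A / (A + C) by apply: divr_gt0; lra.
have t1 : A / (A + C) <= 1 by rewrite ler_pdivrMr //; lra.
have := H _ t0 t1.
rewrite mulrAC ler_pdivlMr //; nra.
Qed.

Lemma lim_n (R : realType) (A C : R) : 0 <= C ->
  (forall N : nat, A <= C / (N.+1)%:R) -> A <= 0.
Proof.
move=> C0 H; apply: (lim_t C0) => t t0 t1.
have ti : 0 < t^-1 by rewrite invr_gt0.
have := archi_boundP (ltW ti).
set N := Num.Def.archi_bound _ => HN.
apply: (le_trans (H N)).
have hN : t^-1 < N.+1%:R by apply: (lt_le_trans HN); rewrite ler_nat.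
rewrite mulrC ler_wpM2r //.
rewrite invf_ple ?posrE ?ltr0n //; exact: ltW.
Qed.

Lemma sc_cvx (R : realType) n (mu : R) (G : 'cV[R]_n -> R) gradG :
  0 < mu -> strongly_convex mu G gradG ->
  forall x1 x2, 0 <= G x1 - G x2 - dot (gradG x2) (x1 - x2).
Proof.
move=> mu0 H x1 x2; apply: le_trans (H x1 x2).
by apply: mulr_ge0; [apply: divr_ge0; lra| apply: sqnorm_ge0].
Qed.

Lemma smooth_sq (R : realType) n (L : R) (gradG : 'cV[R]_n -> 'cV[R]_n) :
  0 < L -> smooth L gradG ->
  forall x1 x2, sqnorm (gradG x1 - gradG x2) <= L ^+ 2 * sqnorm (x1 - x2).
Proof.
move=> L0 H x1 x2; have h := H x1 x2.
have := ler_pM (sqrtr_ge0 _) (sqrtr_ge0 _) h h.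
rewrite -expr2 sqr_sqrtr ?sqnorm_ge0 //.
by rewrite mulrACA -!expr2 sqr_sqrtr ?sqnorm_ge0.
Qed.

Lemma descent_n (R : realType) n (L : R) (G : 'cV[R]_n -> R) gradG :
  0 < L ->
  (forall x1 x2, 0 <= G x1 - G x2 - dot (gradG x2) (x1 - x2)) ->
  (forall x1 x2, sqnorm (gradG x1 - gradG x2) <= L ^+ 2 * sqnorm (x1 - x2)) ->
  forall x d (m : nat), G (x + m%:R *: d) - G x - m%:R * dot (gradG x) d
     <= L * sqnorm d * (m%:R * (m%:R + 1)) / 2.
Proof.
move=> L0 cvx sm x d; elim=> [|m IH].
  by rewrite scale0r addr0 mul0r !mul0r mulr0 subrr sub0r oppr0.
set xm := x + m%:R *: d.
have E1 : x + m.+1%:R *: d = xm + d by rewrite /xm -natr1 scalerDl scale1r addrA.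
rewrite E1 -natr1.
have c1 := cvx xm (xm + d).
have E2 : xm - (xm + d) = - d by rewrite opprD addrA subrr add0r.
rewrite E2 dotNr in c1.
have s1 := sm (xm + d) x.
have E3 : xm + d - x = (m%:R + 1) *: d by rewrite /xm; apply/matrixP => i j; rewrite !mxE; ring.
rewrite E3 sqnormZ in s1.
set s := L * (m%:R + 1).
have s0 : 0 < s by apply: mulr_gt0 => //; rewrite ltr_pwDr ?ler0n //.
have dl := dot_le (gradG (xm + d) - gradG x) d s0.
rewrite dotBl in dl.
have D0 := sqnorm_ge0 d.
have h : 2 * s * (dot (gradG (xm + d)) d - dot (gradG x) d) <= 2 * s * (s * sqnorm d).
  apply: (le_trans dl).
  have : L ^+ 2 * ((m%:R + 1) ^+ 2 * sqnorm d) = s ^+ 2 * sqnorm d by rewrite /s; ring.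
  lra.
rewrite ler_pM2l in h; last by lra.
rewrite /s in h.
rewrite -/xm in IH.
have : G xm - G x - m%:R * dot (gradG x) d <= L * sqnorm d * (m%:R * (m%:R + 1)) / 2 := IH.
move: h c1. set gd := dot _ d. set g0 := dot (gradG x) d.
move=> h c1 IH'.
lra.
Qed.

Lemma descent (R : realType) n (L : R) (G : 'cV[R]_n -> R) gradG :
  0 < L ->
  (forall x1 x2, 0 <= G x1 - G x2 - dot (gradG x2) (x1 - x2)) ->
  (forall x1 x2, sqnorm (gradG x1 - gradG x2) <= L ^+ 2 * sqnorm (x1 - x2)) ->
  forall x d, G (x + d) <= G x + dot (gradG x) d + L / 2 * sqnorm d.
Proof.
move=> L0 cvx sm x d.
have D0 := sqnorm_ge0 d.
suff : G (x + d) - G x - dot (gradG x) d - L / 2 * sqnorm d <= 0 by lra.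
apply: (@lim_n _ _ (L / 2 * sqnorm d)); first by apply: mulr_ge0 => //; lra.
move=> N.
have := descent_n L0 cvx sm x (N.+1%:R^-1 *: d) N.+1.
have m0 : N.+1%:R != 0 :> R by rewrite pnatr_eq0.
rewrite scalerA mulfV // scale1r dotZr sqnormZ.
set m : R := N.+1%:R in m0 *.
set r := m^-1.
have mr : m * r = 1 by rewrite /r mulfV.
have -> : L * (r ^+ 2 * sqnorm d) * (m * (m + 1)) / 2 = L / 2 * sqnorm d + L / 2 * sqnorm d * r.
  have -> : L * (r ^+ 2 * sqnorm d) * (m * (m + 1)) / 2 = L / 2 * sqnorm d * (m * r) * (m * r + r) by ring.
  by rewrite mr; ring.
rewrite mulrA mr mul1r.
lra.
Qed.

Lemma coco (R : realType) n (L : R) (G : 'cV[R]_n -> R) gradG :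
  0 < L ->
  (forall x1 x2, 0 <= G x1 - G x2 - dot (gradG x2) (x1 - x2)) ->
  (forall x1 x2, sqnorm (gradG x1 - gradG x2) <= L ^+ 2 * sqnorm (x1 - x2)) ->
  forall x y, L^-1 * sqnorm (gradG y - gradG x) <= dot (gradG y - gradG x) (y - x).
Proof.
move=> L0 cvx sm.
have c1 : forall x y, L^-1 / 2 * sqnorm (gradG y - gradG x)
     <= G y - G x - dot (gradG x) (y - x).
  move=> x y; set g := gradG y - gradG x; set r := L^-1.
  have Lr : L * r = 1 by rewrite /r mulfV // gt_eqF.
  have h1 := cvx (y - r *: g) x.
  have h2 := descent L0 cvx sm y (- (r *: g)).
  rewrite dotNr dotZr sqnormN sqnormZ in h2.
  have E : y - r *: g - x = (y - x) - r *: g by apply/matrixP => i j; rewrite !mxE; ring.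
  rewrite E dotBr dotZr in h1.
  have Eg : sqnorm g = dot (gradG y) g - dot (gradG x) g by rewrite /sqnorm {1}/g dotBl.
  have E2 : L / 2 * (r ^+ 2 * sqnorm g) = r / 2 * sqnorm g * (L * r) by ring.
  rewrite E2 Lr mulr1 in h2.
  have Eg2 : r * dot (gradG y) g - r * dot (gradG x) g = r * sqnorm g by rewrite Eg; ring.
  lra.
move=> x y; have := c1 x y; have := c1 y x.
rewrite (_ : gradG x - gradG y = - (gradG y - gradG x)); last by rewrite opprB.
rewrite sqnormN.
have E : x - y = - (y - x) by rewrite opprB.
rewrite E dotNr.
have : dot (gradG y - gradG x) (y - x) = dot (gradG y) (y - x) - dot (gradG x) (y - x) by rewrite dotBl.
lra.
Qed.

Lemma psi_min (R : realType) n (G : 'cV[R]_n -> R) gradG (eta : R) (c w z : 'cV[R]_n) :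
  0 < eta ->
  (forall x1 x2, 0 <= G x1 - G x2 - dot (gradG x2) (x1 - x2)) ->
  (forall u, G w + (2 * eta)^-1 * sqnorm (w - c) <= G u + (2 * eta)^-1 * sqnorm (u - c)) ->
  sqnorm (z - w) <= eta ^+ 2 * sqnorm (gradG z + eta^-1 *: (z - c)).
Proof.
move=> e0 cvx wmin.
set k := (2 * eta)^-1.
have k0 : 0 < k by rewrite /k invr_gt0; lra.
have k2 : 2 * k = eta^-1 by rewrite /k invfM mulrA mulfV ?mul1r //; lra.
set S := sqnorm (z - w).
have S0 : 0 <= S by apply: sqnorm_ge0.
have A : G w + k * sqnorm (w - c) + k * S - (G z + k * sqnorm (z - c)) <= 0.
  apply: (lim_t (_ : 0 <= k * S)); first by apply: mulr_ge0 => //; lra.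
  move=> t t0 t1.
  set m := t *: z + (1 - t) *: w.
  have Ez : z - m = (1 - t) *: (z - w) by apply/matrixP => i j; rewrite !mxE; ring.
  have Ew : w - m = (- t) *: (z - w) by apply/matrixP => i j; rewrite !mxE; ring.
  have c1 := cvx z m; have c2 := cvx w m.
  rewrite Ez dotZr in c1; rewrite Ew dotZr in c2.
  have p1 := mulr_ge0 (ltW t0) c1.
  have p2 := mulr_ge0 (_ : 0 <= 1 - t) c2.
  have {}p2 : 0 <= (1 - t) * (G w - G m - - t * dot (gradG m) (z - w)).
    by apply: p2; lra.
  have Em : m - c = t *: (z - c) + (1 - t) *: (w - c) by apply/matrixP => i j; rewrite !mxE; ring.
  have Ezw : z - w = (z - c) - (w - c) by apply/matrixP => i j; rewrite !mxE; ring.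
  have wm := wmin m.
  rewrite Em (sqnormD (t *: _)) !sqnormZ dotZl dotZr -/k in wm.
  rewrite /S Ezw (sqnormB (z - c)).
  set Z := sqnorm (z - c) in wm *. set W := sqnorm (w - c) in wm *.
  set X := dot (z - c) (w - c) in wm *.
  suff : t * (G w + k * W + k * (Z - 2 * X + W) - (G z + k * Z) - t * (k * (Z - 2 * X + W))) <= 0.
    by rewrite pmulr_rle0 //; lra.
  set D := dot (gradG m) (z - w) in p1 p2.
  have E1 : t * (G z - G m - (1 - t) * D) = t * G z - t * G m - t * (1 - t) * D by ring.
  have E2 : (1 - t) * (G w - G m - - t * D) = (1 - t) * G w - (1 - t) * G m + t * (1 - t) * D by ring.
  rewrite E1 in p1; rewrite E2 in p2.
  have E3 : t * (G w + k * W + k * (Z - 2 * X + W) - (G z + k * Z) - t * (k * (Z - 2 * X + W)))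
     = t * G w - t * G z + k * (t * (2 - t) * W - t * t * Z - 2 * t * (1 - t) * X) by ring.
  rewrite E3.
  have E4 : k * (t ^+ 2 * Z + 2 * (t * ((1 - t) * X)) + (1 - t) ^+ 2 * W) =
            k * (t * t * Z + 2 * t * (1 - t) * X + W - t * (2 - t) * W) by ring.
  rewrite E4 in wm.
  lra.
have B : G z + k * sqnorm (z - c) + dot (gradG z + eta^-1 *: (z - c)) (w - z) + k * S
         <= G w + k * sqnorm (w - c).
  have c1 := cvx w z.
  have Ewc : w - c = (z - c) + (w - z) by apply/matrixP => i j; rewrite !mxE; ring.
  have Szw : S = sqnorm (w - z) by rewrite /S -sqnormN opprB.
  rewrite Ewc (sqnormD (z - c)) dotDl dotZl -k2 Szw.
  lra.
set e := gradG z + eta^-1 *: (z - c).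
have Ed : dot e (w - z) = - dot e (z - w) by rewrite -dotNr opprB.
rewrite Ed in B.
have h : eta^-1 * S <= dot e (z - w) by rewrite -k2; lra.
rewrite ler_pdivrMl // in h.
have dl := dot_le (z - w) e e0.
rewrite dotC -/S in dl.
nra.
Qed.

Lemma core (R : realType) n (h a b e d : 'cV[R]_n) (mu L eta : R) :
  0 < mu -> 0 < L -> 0 < eta ->
  mu * sqnorm h + L^-1 * sqnorm a <= 2 * dot h a ->
  sqnorm d <= eta ^+ 2 * sqnorm e ->
  (1 + mu * eta / 2) * eta^-1 * sqnorm (h - eta *: e)
  <= eta^-1 * sqnorm (h - eta *: e + eta *: (a + b))
     + (2 * eta + mu * eta ^+ 2) * sqnorm e
     - (2 * eta)^-1 * sqnorm (eta *: (a + b - e) + d)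
     - 2 * dot b h - L^-1 * sqnorm a.
Proof.
move=> mu0 L0 e0 H1 H2.
set U := sqnorm (h - eta *: e).
set P := sqnorm (eta *: (a + b - e)).
set S := sqnorm (eta *: (a + b - e) + d).
set E := sqnorm e. set X := dot h a. set Y := dot h b.
set A := sqnorm a. set Hh := sqnorm h. set D := sqnorm d.
have F1 : sqnorm (h - eta *: e + eta *: (a + b)) = U + 2 * eta * X + 2 * eta * Y + P - eta ^+ 2 * E.
  rewrite /U /P (sqnormD (h - eta *: e)) !sqnormZ dotZr (sqnormB (a + b)) dotBl dotZl !dotDr.
  rewrite dotDl (dotC e a) (dotC e b) /X /Y /E; ring.
have F2 : U <= 2 * Hh + 2 * eta ^+ 2 * E.
  have := sqnorm_ge0 (h + eta *: e).
  rewrite /U (sqnormD h) (sqnormB h) !sqnormZ !dotZr -/Hh -/E.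
  lra.
have F3 : S <= 2 * P + 2 * D.
  have := sqnorm_ge0 (eta *: (a + b - e) - d).
  rewrite /S (sqnormB _ d) (sqnormD _ d) -/P -/D.
  lra.
have F5 : eta * (mu * Hh) + eta * (L^-1 * A) <= eta * (2 * X).
  by rewrite -mulrDr ler_pM2l.
have F2' : mu * eta / 2 * U <= mu * eta / 2 * (2 * Hh + 2 * eta ^+ 2 * E).
  have me : 0 < mu * eta / 2 by rewrite divr_gt0 ?mulr_gt0.
  by rewrite ler_pM2l.
have F4 : D <= eta ^+ 2 * E := H2.
rewrite F1 -/S -/Y.
have Yc : dot b h = Y by rewrite /Y dotC.
rewrite Yc.
set Q := 2 * eta * X - eta * (L^-1 * A) + P + eta ^+ 2 * E + mu * eta ^+ 3 * E - S / 2 - mu * eta / 2 * U.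
have Q0 : 0 <= Q.
  rewrite /Q.
  have : mu * eta / 2 * (2 * Hh + 2 * eta ^+ 2 * E) = eta * (mu * Hh) + mu * eta ^+ 3 * E by field.
  have : eta * (2 * X) = 2 * eta * X by ring.
  lra.
have eq : eta^-1 * (U + 2 * eta * X + 2 * eta * Y + P - eta ^+ 2 * E) +
   (2 * eta + mu * eta ^+ 2) * E - (2 * eta)^-1 * S - 2 * Y - L^-1 * A
   - (1 + mu * eta / 2) * eta^-1 * U = eta^-1 * Q.
  rewrite /Q; field; lra.
have : 0 <= eta^-1 * Q by apply: mulr_ge0 => //; rewrite invr_ge0; lra.
lra.
Qed.

Theorem lemma9 (R : realType) (dx dy : nat)
  (G : 'cV[R]_dx -> R) (gradG : 'cV[R]_dx -> 'cV[R]_dx) (mux Lx : R)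
  (F : 'cV[R]_dy -> \bar R) (K : 'M[R]_(dy, dx))
  (xs : 'cV[R]_dx) (ys : 'cV[R]_dy)
  (etax etay betay theta : R)
  (x xhat w : nat -> 'cV[R]_dx) (y ybar g : nat -> 'cV[R]_dy) :
  0 < mux -> 0 < Lx ->
  is_gradient G gradG -> strongly_convex mux G gradG -> smooth Lx gradG ->
  proper_fun F -> convex_fun F -> closed_fun F ->
  (* (xs, ys) solves the saddle point problem *)
  gradG xs + K^T *m ys = 0 -> K *m xs \in subdiff (conjugate F) ys ->
  0 < etax -> 0 < etay -> 0 < betay -> 0 <= theta <= 1 ->
  (* APDA with inexact prox; xhat k is an arbitrary output of the inner method *)
  ybar 0%N = y 0%N ->
  (forall k, x k.+1 = x k - etax *: (gradG (xhat k) + K^T *m ybar k)) ->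
  (forall k, g k.+1 \in subdiff (conjugate F) (y k.+1)) ->
  (forall k, y k.+1 = y k - etay *: (g k.+1 - K *m xhat k)
                      - (etay * betay) *: (K *m (K^T *m y k + gradG (xhat k)))) ->
  (forall k, ybar k.+1 = y k.+1 + theta *: (y k.+1 - y k)) ->
  (* w k is the exact minimizer of Psi^k *)
  (forall k z, Psi G K etax (x k) (ybar k) (w k) <= Psi G K etax (x k) (ybar k) z) ->
  forall k : nat,
    (1 + mux * etax / 2) * etax^-1 * sqnorm (x k.+1 - xs)
    <= etax^-1 * sqnorm (x k - xs)
       + (2 * etax + mux * etax ^+ 2) * sqnorm (gradPsi gradG K etax (x k) (ybar k) (xhat k))
       - (2 * etax)^-1 * sqnorm (x k - w k)
       - 2 * dot (K^T *m ybar k - K^T *m ys) (xhat k - xs)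
       - Lx^-1 * sqnorm (gradG (xhat k) - gradG xs).
Proof.
move=> mu0 L0 _ hsc hsm _ _ _ hsol _ e0 _ _ _ _ hx _ _ _ hw k.
have cvx := sc_cvx mu0 hsc.
have sm := smooth_sq L0 hsm.
have H2 := psi_min (xhat k) e0 cvx (hw k).
have hxk := hx k.
rewrite /gradPsi.
move: H2 hxk.
set Kyb := K^T *m ybar k.
set Kys := K^T *m ys.
set xh := xhat k.
have gs : gradG xs = - Kys by apply/eqP; rewrite -addr_eq0 hsol.
set h := xh - xs. set a := gradG xh - gradG xs. set b := Kyb - Kys.
set e := gradG xh + etax^-1 *: (xh - (x k - etax *: Kyb)).
set d := xh - w k.
move=> H2 hxk.
have en : etax != 0 by rewrite gt_eqF.
have E1 : x k.+1 - xs = h - etax *: e.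
  by rewrite hxk /h /e; apply/matrixP => i0 j0; rewrite !mxE; field.
have E2 : x k - xs = h - etax *: e + etax *: (a + b).
  by rewrite /h /e /a /b gs; apply/matrixP => i0 j0; rewrite !mxE; field.
have E3 : x k - w k = etax *: (a + b - e) + d.
  by rewrite /d /e /a /b gs; apply/matrixP => i0 j0; rewrite !mxE; field.
have H1 : mux * sqnorm h + Lx^-1 * sqnorm a <= 2 * dot h a.
  have c1 := coco L0 cvx sm xs xh.
  have s1 := hsc xh xs. have s2 := hsc xs xh.
  have Eh : xs - xh = - h by rewrite opprB.
  rewrite Eh sqnormN dotNr -/h in s2.
  rewrite -/h in s1.
  rewrite -/a -/h in c1.
  have : dot h a = dot (gradG xh) h - dot (gradG xs) h by rewrite dotC /a dotBl.
  rewrite dotC in c1. lra.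
rewrite E1 E2 E3.
exact: core mu0 L0 e0 H1 H2.
Qed.
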